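(* Let $M$ be a finite-dimensional von Neumann algebra and let $D:M\to M$ be an additive derivation. Then $D$ can be uniquely represented as $D=D_a+D_\delta$, where $D_a(x)=ax-xa$ is the inner derivation implemented by some $a\in M$, and $D_\delta$ is the additive derivation defined below from the restriction $\delta$ of $D$ to the center $Z(M)$.
   Context: An additive derivation on a complex algebra $\mathcal A$ is an additive map $D:\mathcal A\to\mathcal A$ with $D(xy)=D(x)y+xD(y)$ for all $x,y$; such a $D$ maps the center $Z(\mathcal A)$ into itself. Construction of $D_\delta$: write $M$ via mutually orthogonal minimal central projections $z_1,\dots,z_k$ with $\sum_i z_i=\mathbf 1$ and $z_iM\cong M_{n_i}(\mathbb C)$. Let $\delta=D|_{Z(M)}$; since $\delta(zx)=z\delta(x)$ for central projections $z$, $\delta$ maps each $z_iZ(M)\cong\mathbb C$ into itself and thus induces an additive derivation $\delta_i:\mathbb C\to\mathbb C$. Fixing matrix units $e^{(i)}_{jl}$ ($1\le j,l\le n_i$) of $z_iM$, every $x\in M$ is uniquely $x=\sum_i\sum_{j,l}\lambda^{(i)}_{jl}e^{(i)}_{jl}$ with $\lambda^{(i)}_{jl}\in\mathbb C$, and $D_\delta(x)=\sum_i\sum_{j,l}\delta_i(\lambda^{(i)}_{jl})e^{(i)}_{jl}$. This $D_\delta$ is an additive derivation on $M$ whose restriction to $Z(M)$ is $\delta$. *)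

(* Defs.v *)
From HB Require Import structures.
From mathcomp Require Import all_boot all_order all_algebra.
Set Implicit Arguments. Unset Strict Implicit. Unset Printing Implicit Defensive.
Import Order.TTheory GRing.Theory Num.Theory.
Local Open Scope ring_scope.

(* A finite-dimensional von Neumann algebra, in its canonical form
   M = (+)_{i < k} M_{n_i}(C), with block i of size (n i).+1 (so n_i >= 1).
   Elements are dependent finite functions i |-> x_i. *)
Definition fdvN (C : numClosedFieldType) (k : nat) (n : 'I_k -> nat) : Type :=
  {dffun forall i : 'I_k, 'M[C]_((n i).+1)}.

Section FDVN.
Variables (C : numClosedFieldType) (k : nat) (n : 'I_k -> nat).
Local Notation M := (fdvN C n).

Definition vadd (x y : M) : M :=
  @finfun _ (fun i => 'M[C]_((n i).+1)) (fun i => x i + y i).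
Definition vopp (x : M) : M :=
  @finfun _ (fun i => 'M[C]_((n i).+1)) (fun i => - x i).
Definition vmul (x y : M) : M :=
  @finfun _ (fun i => 'M[C]_((n i).+1)) (fun i => x i *m y i).

Definition additive_derivation (D : M -> M) : Prop :=
  (forall x y, D (vadd x y) = vadd (D x) (D y)) /\
  (forall x y, D (vmul x y) = vadd (vmul (D x) y) (vmul x (D y))).

Definition inner_der (a : M) (x : M) : M := vadd (vmul a x) (vopp (vmul x a)).

(* lambda z_i : the central element equal to lambda*1 in block i and 0 elsewhere;
   z_i = zproj i 1 is the i-th minimal central projection. *)
Definition zproj (i : 'I_k) (l : C) : M :=
  @finfun _ (fun j => 'M[C]_((n j).+1))
    (fun j => if j == i then l%:M else 0).

(* delta_i : C -> C induced by delta = D|_{Z(M)} on z_i Z(M) ~= C via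
   lambda |-> lambda z_i; the inverse of this identification reads off
   the (0,0) entry of block i. *)
Definition delta_i (D : M -> M) (i : 'I_k) (l : C) : C :=
  (D (zproj i l)) i ord0 ord0.

Definition D_delta (D : M -> M) (x : M) : M :=
  @finfun _ (fun i => 'M[C]_((n i).+1))
    (fun i => \matrix_(j, l) delta_i D i (x i j l)).
End FDVN.

(* Main.v *)
Require Import Defs.
From HB Require Import structures.
From mathcomp Require Import all_boot all_order all_algebra.
Set Implicit Arguments. Unset Strict Implicit. Unset Printing Implicit Defensive.
Import Order.TTheory GRing.Theory Num.Theory.
Local Open Scope ring_scope.

Section S.
Variables (C : numClosedFieldType) (k : nat) (n : 'I_k -> nat).
Local Notation M := (fdvN C n).
Local Notation vadd := (@vadd C k n).
Local Notation vmul := (@vmul C k n).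
Local Notation vopp := (@vopp C k n).
Local Notation zproj := (@zproj C k n).

Definition E (i : 'I_k) (r s : nat) (c : C) : M :=
  @finfun _ (fun j => 'M[C]_((n j).+1))
   (fun j => \matrix_(a, b) if (j == i) && (a == r :> nat) && (b == s :> nat) then c else 0).

Definition vzero : M := @finfun _ (fun j => 'M[C]_((n j).+1)) (fun j => 0).
Definition vone : M := @finfun _ (fun j => 'M[C]_((n j).+1)) (fun j => 1%:M).

Lemma EE i r s c j a b : E i r s c j a b =
  if (j == i) && (a == r :> nat) && (b == s :> nat) then c else 0.
Proof. by rewrite /E ffunE mxE. Qed.

Lemma vaddE (x y : M) j a b : vadd x y j a b = x j a b + y j a b.
Proof. by rewrite /vadd ffunE mxE. Qed.
Lemma voppE (x : M) j a b : vopp x j a b = - x j a b.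
Proof. by rewrite /vopp ffunE mxE. Qed.
Lemma vmulE (x y : M) j a b : vmul x y j a b = \sum_m x j a m * y j m b.
Proof. by rewrite /vmul ffunE mxE. Qed.
Lemma vzeroE j a b : vzero j a b = 0.
Proof. by rewrite /vzero ffunE mxE. Qed.
Lemma voneE j a b : vone j a b = (a == b)%:R.
Proof. by rewrite /vone ffunE mxE. Qed.
Lemma zprojE (i : 'I_k) (l : C) j a b : zproj i l j a b = if j == i then l * (a == b)%:R else 0.
Proof. rewrite /zproj ffunE; case: eqP => _; rewrite ?mxE ?mulr_natr //. Qed.

Lemma vext (x y : M) : (forall j a b, x j a b = y j a b) -> x = y.
Proof. move=> H; apply/ffunP => j; apply/matrixP => a b; exact: H. Qed.

Lemma vsumE I (s : seq I) (P : pred I) (F : I -> M) j a b :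
  (\big[vadd/vzero]_(t <- s | P t) F t) j a b = \sum_(t <- s | P t) F t j a b.
Proof.
apply: (big_morph (fun x : M => x j a b)) => [x y|]; by rewrite ?vaddE ?vzeroE.
Qed.

Lemma vsumO m (F : 'I_m -> M) j a b :
  (\big[vadd/vzero]_(t < m) F t) j a b = \sum_(t < m) F t j a b.
Proof. exact: vsumE. Qed.

Lemma PL i r c (y : M) j a b : vmul (E i r 0 c) y j a b =
  if (j == i) && (a == r :> nat) then c * y j ord0 b else 0.
Proof.
rewrite vmulE; case: ifP => H.
  rewrite (bigD1 ord0) //= big1 ?addr0; first by rewrite EE H.
  by move=> m /negbTE Hm; rewrite EE H /= (_ : (m == 0 :> nat) = false) ?mul0r //; apply: Hm.
by rewrite big1 // => m _; rewrite EE H mul0r.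
Qed.

Lemma PR i s c (y : M) j a b : vmul y (E i 0 s c) j a b =
  if (j == i) && (b == s :> nat) then y j a ord0 * c else 0.
Proof.
rewrite vmulE; case: ifP => H.
  rewrite (bigD1 ord0) //= big1 ?addr0; first by rewrite EE; move/andP: H => [-> ->].
  move=> m /negbTE Hm; rewrite EE (_ : (m == 0 :> nat) = false) ?andbF ?andFb ?mulr0 //.
by rewrite big1 // => m _; rewrite EE; case: (j == i) H => /= [Hb|_]; rewrite ?Hb ?andbF mulr0.
Qed.

Lemma sum_ord_if (j : 'I_k) (G : 'I_k -> C) :
  (forall i, (j == i) = false -> G i = 0) -> \sum_(i < k) G i = G j.
Proof.
move=> H; rewrite (bigD1 j) //= big1 ?addr0 // => i /negbTE Hi; apply: H.
by rewrite eq_sym.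
Qed.

Lemma sum_nat_if m (a : 'I_m) (F : 'I_m -> C) :
  \sum_(r < m) (if (a == r :> nat) then F r else 0) = F a.
Proof.
rewrite (bigD1 a) //= eqxx big1 ?addr0 // => r Hr.
by rewrite (_ : (a == r :> nat) = false) //; apply/negbTE; rewrite eq_sym.
Qed.

Lemma sum_if_out m (c : bool) (F : 'I_m -> C) :
  \sum_(t < m) (if c then F t else 0) = if c then \sum_(t < m) F t else 0.
Proof. by case: c => //; rewrite big1. Qed.

Lemma cancel_double (d : C) : d = d + d -> d = 0.
Proof. by rewrite -{1}[d]addr0 => /addrI ->. Qed.

Lemma mulv1 (y : M) : vmul y vone = y.
Proof. by apply/ffunP => j; rewrite /vmul /vone !ffunE mulmx1. Qed.
Lemma mul1v (y : M) : vmul vone y = y.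
Proof. by apply/ffunP => j; rewrite /vmul /vone !ffunE mul1mx. Qed.

Lemma mulzp (y : M) (i : 'I_k) (c : C) j a b :
  vmul y (zproj i c) j a b = if j == i then y j a b * c else 0.
Proof.
rewrite /vmul /zproj !ffunE; case: eqP => _; last by rewrite mulmx0 mxE.
by rewrite mul_mx_scalar mxE mulrC.
Qed.

Lemma Eprod i s c : vmul (E i 0 0 c) (E i 0 s 1) = E i 0 s c.
Proof.
apply: vext => j a b; rewrite PL !EE.
by case: (j == i); case: (a == 0 :> nat); case: (b == s :> nat); rewrite /= ?mulr1 ?mulr0.
Qed.

Lemma Ezp (i : 'I_k) (c : C) : vmul (E i 0 0 1) (zproj i c) = E i 0 0 c.
Proof.
apply: vext => j a b; rewrite PL zprojE !EE.
case: (j == i); case: (a == 0 :> nat); rewrite /= ?mul1r //.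
have -> : (ord0 == b) = (b == 0 :> nat) by rewrite eq_sym.
by case: (b == 0 :> nat); rewrite ?mulr1 ?mulr0.
Qed.

Lemma Eidem i : vmul (E i 0 0 1) (E i 0 0 1) = E i 0 0 1.
Proof. exact: Eprod. Qed.

Lemma decomp (x : M) : x = \big[vadd/vzero]_(i < k) \big[vadd/vzero]_(r < (n i).+1)
   \big[vadd/vzero]_(s < (n i).+1) vmul (E i r 0 1) (E i 0 s (x i r s)).
Proof.
apply: vext => j a b; rewrite vsumO (@sum_ord_if j).
rewrite vsumO.
  under eq_bigr => r _ do rewrite vsumO.
  under eq_bigr => r _ do under eq_bigr => s _ do rewrite PL EE eqxx /=.
  under eq_bigr => r _ do rewrite sum_if_out.
  rewrite sum_nat_if.
  under eq_bigr => s _ do rewrite mul1r.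
  by rewrite sum_nat_if.
move=> i Hji; rewrite vsumO big1 // => r _; rewrite vsumO big1 // => s _.
by rewrite PL Hji.
Qed.

Lemma vone_decomp : vone = \big[vadd/vzero]_(i < k) \big[vadd/vzero]_(t < (n i).+1)
   vmul (E i t 0 1) (E i 0 t 1).
Proof.
apply: vext => j a b; rewrite voneE vsumO (@sum_ord_if j).
  rewrite vsumO.
  under eq_bigr => t _ do rewrite PL EE eqxx /=.
  rewrite sum_nat_if mul1r.
  by case: eqP => [->|Hab]; rewrite ?eqxx //; case: eqP => // Hba; case: Hab; apply: val_inj.
move=> i Hji; rewrite vsumO big1 // => r _.
by rewrite PL Hji.
Qed.

Variable D : M -> M.
Hypothesis hA : forall x y, D (vadd x y) = vadd (D x) (D y).
Hypothesis hM : forall x y, D (vmul x y) = vadd (vmul (D x) y) (vmul x (D y)).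

Lemma D0 : D vzero = vzero.
Proof.
have H : vzero = vadd vzero vzero by apply: vext => j a b; rewrite vaddE vzeroE addr0.
apply: vext => j a b; rewrite vzeroE; apply: cancel_double.
by rewrite -vaddE -hA -H.
Qed.

Lemma Dsum I (s : seq I) (P : pred I) (F : I -> M) :
  D (\big[vadd/vzero]_(t <- s | P t) F t) = \big[vadd/vzero]_(t <- s | P t) D (F t).
Proof. exact: (big_morph D hA D0). Qed.

Lemma DsumO m (F : 'I_m -> M) :
  D (\big[vadd/vzero]_(t < m) F t) = \big[vadd/vzero]_(t < m) D (F t).
Proof. exact: Dsum. Qed.

Lemma Done : D vone = vzero.
Proof.
apply: vext => j a b; rewrite vzeroE; apply: cancel_double.
have := hM vone vone; rewrite !mulv1 mul1v => H.
by rewrite {1}H vaddE.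
Qed.

Lemma De00 i : D (E i 0 0 1) i ord0 ord0 = 0.
Proof.
apply: cancel_double.
by rewrite -{1}Eidem hM vaddE PL PR eqxx /= mulr1 mul1r.
Qed.

Lemma Ddelta i c : D (E i 0 0 c) i ord0 ord0 = delta_i D i c.
Proof.
rewrite /delta_i -Ezp hM vaddE mulzp PL De00 !eqxx /= mul0r add0r mul1r.
by [].
Qed.

Lemma Dunit j (s b : 'I_(n j).+1) :
  D (E j b 0 1) j s ord0 + D (E j 0 s 1) j ord0 b = 0.
Proof.
have := congr1 (fun x : M => x j s b) Done.
rewrite vzeroE vone_decomp Dsum vsumO (@sum_ord_if j).
  rewrite DsumO vsumO.
  under eq_bigr => t _ do rewrite hM vaddE PL PR eqxx /=.
  by rewrite big_split /= !sum_nat_if mulr1 mul1r.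
move=> i Hji; rewrite DsumO vsumO big1 // => r _.
by rewrite hM vaddE PL PR Hji /= addr0.
Qed.

Definition Aelt : M := \big[vadd/vzero]_(i < k) \big[vadd/vzero]_(r < (n i).+1)
   vmul (D (E i r 0 1)) (E i 0 r 1).

Lemma AE j a m : Aelt j a m = D (E j m 0 1) j a ord0.
Proof.
rewrite vsumO (@sum_ord_if j).
  rewrite vsumO.
  under eq_bigr => r _ do rewrite PR eqxx /=.
  by rewrite sum_nat_if mulr1.
by move=> i Hji; rewrite vsumO big1 // => r _; rewrite PR Hji.
Qed.

Lemma DE0s i s c : D (E i 0 s c) =
  vadd (vmul (D (E i 0 0 c)) (E i 0 s 1)) (vmul (E i 0 0 c) (D (E i 0 s 1))).
Proof. by rewrite -hM Eprod. Qed.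

Lemma DdeltaE (x : M) j a b : D_delta D x j a b = delta_i D j (x j a b).
Proof. by rewrite /D_delta ffunE mxE. Qed.

Lemma main x : D x = vadd (inner_der Aelt x) (D_delta D x).
Proof.
rewrite {1}(decomp x) DsumO; apply: vext => j a b.
rewrite vsumO (@sum_ord_if j); last first.
  move=> i Hji; rewrite DsumO vsumO big1 // => r _; rewrite DsumO vsumO big1 // => s _.
  by rewrite hM DE0s !(vaddE, PL, PR) Hji /= addr0.
rewrite DsumO vsumO.
under eq_bigr => r _ do rewrite DsumO vsumO.
under eq_bigr => r _ do under eq_bigr => s _ do rewrite hM DE0s !(vaddE, PL, PR) eqxx /=.
under eq_bigr => r _ do rewrite big_split /= sum_nat_if sum_if_out.
rewrite big_split /= sum_nat_if.
under [X in _ + X = _]eq_bigr => s _ do rewrite mul1r.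
rewrite big_split /= sum_nat_if mulr1 Ddelta.
rewrite /inner_der !vaddE voppE !vmulE DdeltaE.
under [X in _ = X + _ + _]eq_bigr => m _ do rewrite AE.
under [X in _ = _ + - X + _]eq_bigr => m _ do rewrite AE.
have key : forall m : 'I_(n j).+1, D (E j 0 m 1) j ord0 b = - D (E j b 0 1) j m ord0.
  by move=> m; apply/eqP; rewrite -addr_eq0 addrC Dunit.
under [X in _ + (_ + X) = _]eq_bigr => m _ do rewrite key mulrN.
by rewrite sumrN [delta_i _ _ _ + _]addrC addrA.
Qed.
End S.

Theorem lemma3p1 (C : numClosedFieldType) (k : nat) (n : 'I_k -> nat)
  (D : fdvN C n -> fdvN C n) :
  additive_derivation D ->
  (exists a : fdvN C n, forall x, D x = vadd (inner_der a x) (D_delta D x)) /\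
  (forall a b : fdvN C n,
     (forall x, D x = vadd (inner_der a x) (D_delta D x)) ->
     (forall x, D x = vadd (inner_der b x) (D_delta D x)) ->
     forall x, inner_der a x = inner_der b x).
Proof.
move=> [hA hM]; split.
  by exists (Aelt D); exact: main.
move=> a b Ha Hb x; apply: vext => j r s.
have := congr1 (fun y : fdvN C n => y j r s) (etrans (esym (Ha x)) (Hb x)).
by rewrite /= !vaddE => /addIr.
Qed.
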